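(* Let $\mathcal{H}$ be a real $m^{\rm th}$-order $n$-dimensional strong Hankel tensor ($m\ge2$, $m(n-1)$ even). Then $\mathcal{H}$ has no negative H-eigenvalues.
   Context: The Hankel tensor generated by ${\bf h}=(h_0,\dots,h_{m(n-1)})\in\mathbb{R}^{m(n-1)+1}$ has entries $\mathcal{H}_{i_1\dots i_m}=h_{i_1+\dots+i_m}$, $0\le i_j\le n-1$; its associated Hankel matrix is $H$ with $H_{ij}=h_{i+j}$, $0\le i,j\le m(n-1)/2$; $\mathcal{H}$ is a strong Hankel tensor if $H$ is positive semi-definite. A real $\lambda$ is an H-eigenvalue of $\mathcal{H}$ if there is nonzero ${\bf x}\in\mathbb{R}^n$ with $\mathcal{H}{\bf x}^{m-1}=\lambda{\bf x}^{[m-1]}$, where $(\mathcal{H}{\bf x}^{m-1})_i=\sum_{i_2,\dots,i_m}\mathcal{H}_{i i_2\dots i_m}x_{i_2}\cdots x_{i_m}$ and ${\bf x}^{[m-1]}=(x_1^{m-1},\dots,x_n^{m-1})^\top$. *)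

(* Defs.v *)
From HB Require Import structures.
From mathcomp Require Import all_boot all_order all_algebra.
From mathcomp Require Import reals.
Unset Printing Implicit Defensive.
Import Order.TTheory GRing.Theory Num.Theory.
Local Open Scope ring_scope.

(* The generating vector h = (h_0, ..., h_{m(n-1)}) is given as a function
   nat -> R; only the values h_0 .. h_{m(n-1)} are ever used. *)

Definition hankel_dim (m n : nat) : nat := ((m * (n - 1))./2).+1.

Definition hankel_mx (R : pzRingType) (m n : nat) (h : nat -> R)
  : 'M[R]_(hankel_dim m n) :=
  \matrix_(i, j) h (i + j)%N.

Definition psd (R : numDomainType) (k : nat) (A : 'M[R]_k) : Prop :=
  forall v : 'cV[R]_k, 0 <= (v^T *m A *m v) 0 0.

Definition strong_hankel (R : numDomainType) (m n : nat) (h : nat -> R) : Prop :=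
  psd R (hankel_dim m n) (hankel_mx R m n h).

Definition hankel_Hx (R : pzRingType) (m n : nat) (h : nat -> R)
  (x : 'I_n -> R) (i : 'I_n) : R :=
  \sum_(t : {ffun 'I_(m - 1) -> 'I_n})
     h (i + \sum_(j < m - 1) (t j : nat))%N * \prod_(j < m - 1) x (t j).

Definition H_eigenvalue (R : pzRingType) (m n : nat) (h : nat -> R) (lam : R) : Prop :=
  exists x : 'I_n -> R, (exists i, x i != 0) /\
    forall i, hankel_Hx R m n h x i = lam * x i ^+ (m - 1).

(* Main.v *)
Require Import Defs.
From HB Require Import structures.
From mathcomp Require Import all_boot all_order all_algebra.
From mathcomp Require Import reals.
From mathcomp Require Import zify ring lra.
Import Order.TTheory GRing.Theory Num.Theory.
Local Open Scope ring_scope.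

Section Helpers.
Variable R : realType.
Variable h : nat -> R.
Variable D : nat.

Definition Lf (q : {poly R}) : R := \sum_(s < D) h s * q`_s.

Lemma Lf_sum (I : finType) (F : I -> {poly R}) :
  Lf (\sum_i F i) = \sum_i Lf (F i).
Proof.
rewrite /Lf; under eq_bigr do rewrite coef_sum mulr_sumr.
by rewrite exchange_big.
Qed.

Lemma Lf_scale c q : Lf (c *: q) = c * Lf q.
Proof.
rewrite /Lf mulr_sumr; apply: eq_bigr => s _.
by rewrite coefZ mulrCA.
Qed.

Lemma Lf_scaleX c k : (k < D)%N -> Lf (c *: 'X^k) = c * h k.
Proof.
move=> kD; rewrite Lf_scale; congr (_ * _).
rewrite /Lf (bigD1 (Ordinal kD)) //= coefXn eqxx mulr1 big1 ?addr0 //.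
move=> j /eqP neq; rewrite coefXn.
have -> : (nat_of_ord j == k) = false.
  apply/negbTE; apply: contra_not_neq neq => e; exact: val_inj.
by rewrite mulr0.
Qed.

Lemma poly_of_size (p : {poly R}) N : (size p <= N)%N ->
  p = \sum_(i < N) p`_i *: 'X^i.
Proof.
move=> sp; rewrite -poly_def; apply/polyP => k; rewrite coef_poly.
case: ltnP => // kN; rewrite nth_default //; exact: leq_trans sp kN.
Qed.

Lemma size_exp_le (q : {poly R}) a k : (size q <= a.+1)%N ->
  (size (q ^+ k) <= (k * a).+1)%N.
Proof.
move=> sq; elim: k => [|k IH]; first by rewrite expr0 size_poly1.
rewrite exprS; apply: leq_trans (size_polyMleq _ _) _.
have := leq_add sq IH; lia.
Qed.

Lemma expX_sum n (x : 'I_n -> R) k :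
  (\sum_(i < n) x i *: 'X^i) ^+ k =
  \sum_(t : {ffun 'I_k -> 'I_n}) (\prod_(j < k) x (t j)) *: 'X^(\sum_(j < k) (t j : nat)).
Proof.
rewrite -{1}(card_ord k) -prodr_const bigA_distr_bigA /=.
apply: eq_bigr => t _; rewrite scaler_prod; congr (_ *: _).
by rewrite (big_morph (fun n => 'X^n) (exprD 'X) (expr0 _)).
Qed.


Definition Pol {n} (x : 'I_n -> R) : {poly R} := \sum_(i < n) x i *: 'X^i.

Lemma size_P n (x : 'I_n -> R) : (size (Pol x) <= n)%N.
Proof.
rewrite /Pol; apply: (big_ind (fun q : {poly R} => (size q <= n)%N)).
- by rewrite size_poly0.
- move=> p q sp sq; apply: leq_trans (size_polyD _ _) _; by rewrite geq_max sp sq.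
- move=> i _; apply: leq_trans (size_scale_leq _ _) _; by rewrite size_polyXn.
Qed.

Lemma coef_P n (x : 'I_n -> R) (i : 'I_n) : (Pol x)`_i = x i.
Proof.
rewrite /Pol coef_sum (bigD1 i) //= coefZ coefXn eqxx mulr1 big1 ?addr0 //.
move=> j /eqP neq; rewrite coefZ coefXn.
have -> : (nat_of_ord i == j) = false.
  apply/negbTE; apply: contra_not_neq neq => e; exact: val_inj.
by rewrite mulr0.
Qed.

Lemma Hx_L m n (x : 'I_n -> R) (i : 'I_n) : (m * (n - 1) < D)%N -> (1 <= m)%N ->
  hankel_Hx R m n h x i = Lf ('X^i * Pol x ^+ (m - 1)).
Proof.
move=> mD m1; rewrite /Pol expX_sum mulr_sumr Lf_sum /hankel_Hx.
apply: eq_bigr => t _; rewrite -scalerAr -exprD Lf_scaleX; first by rewrite mulrC.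
apply: (@leq_ltn_trans ((n - 1) + (m - 1) * (n - 1))%N).
  apply: leq_add; first by have := ltn_ord i; lia.
  apply: leq_trans (_ : (\sum_(j < m - 1) (n - 1) <= _)%N).
    apply: leq_sum => j _; rewrite -ltnS; apply: leq_trans (ltn_ord (t j)) _; lia.
  by rewrite sum_nat_const card_ord.
have E : ((n - 1) + (m - 1) * (n - 1) = m * (n - 1))%N.
  by rewrite -mulSn subn1 prednK.
by rewrite E.
Qed.

Lemma weighted m n (x : 'I_n -> R) (Z : {poly R}) :
  (m * (n - 1) < D)%N -> (1 <= m)%N -> (size Z <= n)%N ->
  \sum_(i < n) Z`_i * hankel_Hx R m n h x i =
  Lf (Z * Pol x ^+ (m - 1)).
Proof.
move=> mD m1 sZ; rewrite {2}(poly_of_size _ _ sZ) mulr_suml Lf_sum.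
apply: eq_bigr => i _; by rewrite -scalerAl Lf_scale Hx_L.
Qed.

Lemma psd_Lf m n (w : {poly R}) : strong_hankel R m n h ->
  (m * (n - 1) < D)%N -> (size w <= hankel_dim m n)%N -> 0 <= Lf (w * w).
Proof.
move=> Hp mD sw; have := Hp (\col_(i < hankel_dim m n) w`_i).
congr (_ <= _).
rewrite [in RHS](poly_of_size _ _ sw) mulr_suml Lf_sum !mxE.
under eq_bigr => b _ do rewrite !mxE mulr_suml.
rewrite exchange_big /=; apply: eq_bigr => a _.
rewrite mulr_sumr Lf_sum; apply: eq_bigr => b _.
rewrite !mxE -scalerAl -scalerAr scalerA -exprD Lf_scaleX; last first.
  move: (ltn_ord a) (ltn_ord b); move: (a : nat) (b : nat) => a' b'.
  rewrite /hankel_dim; move: (m * (n - 1))%N mD => c; lia.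
ring.
Qed.

End Helpers.

Lemma sum_pos (R : realType) n (f : 'I_n -> R) i0 :
  (forall i, 0 <= f i) -> 0 < f i0 -> 0 < \sum_i f i.
Proof.
move=> f0 fi0; rewrite (bigD1 i0) //=.
apply: (lt_le_trans fi0); rewrite lerDl; exact: sumr_ge0.
Qed.

Lemma even_pow (R : realType) (y : R) a : 0 <= y ^+ (a * 2) /\ (y != 0 -> 0 < y ^+ (a * 2)).
Proof.
rewrite exprM; split; first exact: sqr_ge0.
move=> y0; rewrite lt0r sqr_ge0 andbT sqrf_eq0 expf_eq0 negb_and y0 orbT //.
Qed.

Theorem corollary1 (R : realType) (m n : nat) (h : nat -> R) :
  (2 <= m)%N -> ~~ odd (m * (n - 1)) -> strong_hankel R m n h ->
  forall lam : R, H_eigenvalue R m n h lam -> ~ (lam < 0).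
Proof.
move=> m2 hev Hs lam [x [[i0 xi0] Heig]] lam0.
set D := (m * (n - 1)).+1.
have mD : (m * (n - 1) < D)%N by [].
have m1 : (1 <= m)%N by lia.
have n1 : (0 < n)%N by have := ltn_ord i0; lia.
have key : forall Z : {poly R}, (size Z <= n)%N ->
    lam * \sum_(i < n) Z`_i * x i ^+ (m - 1) = Lf R h D (Z * Pol R x ^+ (m - 1)).
  move=> Z sZ; rewrite -weighted // mulr_sumr; apply: eq_bigr => i _.
  by rewrite Heig mulrCA.
have sP : (size (Pol R x) <= (n - 1).+1)%N.
  by apply: leq_trans (@size_P R n x) _; lia.
case: (boolP (odd m)) => [mo | me].
-
  have no : ~~ odd (n - 1) by move: hev; rewrite oddM mo.
  set r := (n - 1)./2; set a := m./2.
  have nr : (n - 1 = r.*2)%N by rewrite /r; move: no; rewrite -{1}(odd_double_half (n-1)); lia.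
  have ma : m = (a.*2).+1 by rewrite /a -{1}(odd_double_half m) mo; lia.
  set j := (i0 : nat)./2; set k := (i0 - j)%N.
  have i0n := ltn_ord i0.
  have jk : (j + k = i0)%N by rewrite /k /j; lia.
  have jr : (j <= r)%N by rewrite /j; lia.
  have kr : (k <= r)%N by rewrite /k /j; lia.
  set v : {poly R} := 'X^j + 'X^k.
  have sv : (size v <= r.+1)%N.
    apply: leq_trans (size_polyD _ _) _; rewrite geq_max !size_polyXn; lia.
  have sZ : (size (v ^+ 2) <= n)%N.
    apply: leq_trans (@size_exp_le R _ _ 2 sv) _; lia.
  have := key _ sZ.
  have em : (m - 1 = a * 2)%N by lia.
  rewrite em exprM -exprMn expr2.
  have sw : (size (v * Pol R x ^+ a)%R <= hankel_dim m n)%N.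
    apply: leq_trans (size_polyMleq _ _) _.
    have := @size_exp_le R _ _ a sP; rewrite /hankel_dim.
    have E : (m * (n - 1) = (a * r).*2.*2 + r.*2)%N by nia.
    rewrite E; move: sv; move: (size v) (size (Pol R x ^+ a)) => s1 s2.
    have -> : (a * (n - 1) = (a * r).*2)%N by rewrite nr; nia.
    lia.
  have := psd_Lf _ _ _ m n _ Hs mD sw => Hge Heq; rewrite -Heq in Hge.
  have Sp : 0 < \sum_(i < n) (v ^+ 2)`_i * x i ^+ (a * 2).
    have cv : forall i : nat, (v ^+ 2)`_i = (i == (j * 2)%N)%:R + (i == (j + k)%N)%:R *+ 2 + (i == (k * 2)%N)%:R.
      move=> i; rewrite /v sqrrD -!exprM -exprD !coefD !coefXn mulr2n //.
    apply: (@sum_pos R n (fun i => (v ^+ 2)`_i * x i ^+ (a * 2)) i0).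
      move=> i; apply: mulr_ge0; last exact: (even_pow _ _ _).1.
      rewrite cv; apply: addr_ge0; first apply: addr_ge0; by rewrite ?ler0n ?mulrn_wge0 ?ler0n.
    apply: mulr_gt0; last exact: (even_pow _ _ _).2.
    rewrite cv jk eqxx.
    have h1 : 0 <= ((i0 : nat) == (j * 2)%N)%:R :> R by rewrite ler0n.
    have h2 : 0 <= ((i0 : nat) == (k * 2)%N)%:R :> R by rewrite ler0n.
    rewrite mulr2n (_ : true%:R = 1 :> R) //; lra.
  nra.
-
  set a := m./2.
  have ma : m = a * 2 by rewrite /a -{1}(odd_double_half m) (negbTE me); lia.
  have := key _ (@size_P R n x).
  have -> : Pol R x * Pol R x ^+ (m - 1) = Pol R x ^+ a * Pol R x ^+ a.
    by rewrite -exprS -exprD; congr (_ ^+ _); lia.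
  have sw : (size (Pol R x ^+ a) <= hankel_dim m n)%N.
    apply: leq_trans (@size_exp_le R _ _ a sP) _; rewrite /hankel_dim ma.
    have -> : (a * 2 * (n - 1) = (a * (n - 1)).*2)%N by rewrite mulnAC muln2.
    by rewrite doubleK.
  have := psd_Lf _ _ _ m n _ Hs mD sw => Hge Heq; rewrite -Heq in Hge.
  have Sp : 0 < \sum_(i < n) (Pol R x)`_i * x i ^+ (m - 1).
    apply: (sum_pos _ _ _ i0).
      move=> i; rewrite coef_P -exprS (_ : (m - 1).+1 = a * 2)%N; last by lia.
      exact: (even_pow _ _ _).1.
    rewrite coef_P -exprS (_ : (m - 1).+1 = a * 2)%N; last by lia.
    exact: (even_pow _ _ _).2.
  nra.
Qed.
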